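(* For any valid scheme (satisfying (C1)–(C8)) with $N\ge1$, $K\ge2$, \[ \frac{N-1}{N}\,d+\rho_U\ \ge\ 1, \] equivalently $NL\le (N-1)D+N\,H(\mathcal{R}_U)$.
   Context: Model (SPIR with user-side common randomness). There are $N\ge1$ non-colluding databases, each storing the same $K\ge2$ messages $W_1,\dots,W_K$. Each message consists of $L$ i.i.d. symbols uniform over a sufficiently large finite field $\mathbb{F}_q$; entropies are in $q$-ary units, so $H(W_k)=L$ and $H(W_{1:K})=KL$. The databases share server-side common randomness $\mathcal{R}_S$, unknown to the user. The user holds user-side common randomness $\mathcal{R}_U$, a subset of the components of $\mathcal{R}_S$, unknown to the databases except for its size (uniform over subsets of given cardinality). $\mathcal{F}$ is the user's retrieval-strategy randomness. To retrieve $W_k$ the user sends $Q_n^{[k,\mathcal{R}_U]}$ to database $n$, receiving $A_n^{[k,\mathcal{R}_U]}$; $W_{\bar k}=\{W_j:j\ne k\}$. A valid scheme satisfies for all $k,n,\mathcal{R}_U$: (C1) $I(W_{1:K};k,\mathcal{F},\mathcal{R}_S,\mathcal{R}_U)=0$; (C2) $I(Q_{1:N}^{[k,\mathcal{R}_U]};W_{1:K},\mathcal{R}_S\setminus\mathcal{R}_U)=0$; (C3) $H(Q_{1:N}^{[k,\mathcal{R}_U]}\mid\mathcal{F})=0$; (C4) $H(A_n^{[k,\mathcal{R}_U]}\mid Q_n^{[k,\mathcal{R}_U]},W_{1:K},\mathcal{R}_S)=0$; (C5) $H(W_k\mid\mathcal{F},A_{1:N}^{[k,\mathcal{R}_U]},\mathcal{R}_U)=0$;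 (C6) user privacy: for all $k,k',n,\mathcal{R}_U$ there is $\mathcal{R}_U'$ with $H(\mathcal{R}_U')=H(\mathcal{R}_U)$ and $(Q_n^{[k,\mathcal{R}_U]},A_n^{[k,\mathcal{R}_U]},W_{1:K},\mathcal{R}_S)\sim(Q_n^{[k',\mathcal{R}_U']},A_n^{[k',\mathcal{R}_U']},W_{1:K},\mathcal{R}_S)$; (C7) $I(W_{\bar k};\mathcal{F},A_{1:N}^{[k,\mathcal{R}_U]},\mathcal{R}_U)=0$; (C8) $I(\mathcal{R}_S\setminus\mathcal{R}_U;\mathcal{F},A_{1:N}^{[k,\mathcal{R}_U]},W_k,\mathcal{R}_U)=0$. $D$ is the maximal total number of downloaded symbols; $d=D/L$, $\rho_U=H(\mathcal{R}_U)/L$. *)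

(* Defs.v *)
From HB Require Import structures.
From mathcomp Require Import all_boot all_order all_algebra.
From mathcomp Require Import reals exp.
Set Implicit Arguments. Unset Strict Implicit. Unset Printing Implicit Defensive.
Import Order.TTheory GRing.Theory Num.Theory.
Local Open Scope ring_scope.

Section Entropy.
Variables (R : realType) (Om : finType).

Definition is_pmf (P : Om -> R) : Prop :=
  (forall w, 0 <= P w) /\ \sum_(w : Om) P w = 1.

Definition Pr (P : Om -> R) (T : eqType) (X : Om -> T) (t : T) : R :=
  \sum_(w : Om | X w == t) P w.

(* Entropy in base-[b] units:  H(X) = - sum_t p(t) log_b p(t)
   written as  E[ - log_b p_X(X) ]  = - sum_w P(w) log_b Pr[X = X w]. *)
Definition ent (b : nat) (P : Om -> R) (T : eqType) (X : Om -> T) : R :=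
  - \sum_(w : Om) P w * (ln (Pr P X (X w)) / ln b%:R).

Definition jnt (T U : eqType) (X : Om -> T) (Y : Om -> U) : Om -> T * U :=
  fun w => (X w, Y w).

Definition cent (b : nat) (P : Om -> R) (T U : eqType)
    (X : Om -> T) (Y : Om -> U) : R :=
  ent b P (jnt X Y) - ent b P Y.

Definition minf (b : nat) (P : Om -> R) (T U : eqType)
    (X : Om -> T) (Y : Om -> U) : R :=
  ent b P X + ent b P Y - ent b P (jnt X Y).

Definition same_dist (P : Om -> R) (T : eqType) (X Y : Om -> T) : Prop :=
  forall t : T, Pr P X t = Pr P Y t.

End Entropy.

(* The SPIR model with user-side common randomness.                       *)
(*  F      : the finite field F_q  (q = #|F|, entropies in q-ary units)    *)
(*  W      : messages W_1..W_K, each L symbols of F                        *)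
(*  RS     : server-side common randomness, M components (values in C)     *)
(*  S      : a set of component indices; R_U = components of RS in S       *)
(*  Fr     : the user's strategy randomness F                              *)
(*  Q n k S, A n k S : query to / answer from database n for desired k     *)
(*           and user-side randomness R_U given by S; answers are strings  *)
(*           of symbols of F.                                              *)
Section SPIR.
Variables (R : realType) (Om : finType) (P : Om -> R) (F : finFieldType)
  (N K L M : nat) (C TF TQ : eqType)
  (W : Om -> {ffun 'I_K -> {ffun 'I_L -> F}})
  (RS : Om -> {ffun 'I_M -> C})
  (Fr : Om -> TF)
  (Q : 'I_N -> 'I_K -> {set 'I_M} -> Om -> TQ)
  (A : 'I_N -> 'I_K -> {set 'I_M} -> Om -> seq F).

Local Notation H := (ent #|F| P).
Local Notation Hc := (cent #|F| P).
Local Notation I := (minf #|F| P).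

Definition RU (S : {set 'I_M}) : Om -> {ffun 'I_M -> option C} :=
  fun w => [ffun i => if i \in S then Some (RS w i) else None].

Definition RSmRU (S : {set 'I_M}) : Om -> {ffun 'I_M -> option C} := RU (~: S).

Definition Wk (k : 'I_K) : Om -> {ffun 'I_L -> F} := fun w => W w k.
Definition Wbar (k : 'I_K) : Om -> {ffun 'I_K -> option {ffun 'I_L -> F}} :=
  fun w => [ffun j => if j == k then None else Some (W w j)].

Definition Qall (k : 'I_K) (S : {set 'I_M}) : Om -> {ffun 'I_N -> TQ} :=
  fun w => [ffun n => Q n k S w].
Definition Aall (k : 'I_K) (S : {set 'I_M}) : Om -> {ffun 'I_N -> seq F} :=
  fun w => [ffun n => A n k S w].

Definition cst (T : eqType) (t : T) : Om -> T := fun _ => t.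

Definition messages_uniform : Prop :=
  forall x : {ffun 'I_K -> {ffun 'I_L -> F}},
    Pr P W x = 1 / (#|F|%:R ^+ (K * L)).

(* admissible user-side randomness: any subset of R_S of the given size m *)
Definition adm (m : nat) (S : {set 'I_M}) : Prop := #|S| = m.

Record valid_scheme (m : nat) : Prop := {
  C1 : forall (k : 'I_K) S, adm m S ->
         I W (jnt (cst k) (jnt Fr (jnt RS (RU S)))) = 0;
  C2 : forall (k : 'I_K) S, adm m S ->
         I (Qall k S) (jnt W (RSmRU S)) = 0;
  C3 : forall (k : 'I_K) S, adm m S -> Hc (Qall k S) Fr = 0;
  C4 : forall (n : 'I_N) (k : 'I_K) S, adm m S ->
         Hc (A n k S) (jnt (Q n k S) (jnt W RS)) = 0;
  C5 : forall (k : 'I_K) S, adm m S ->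
         Hc (Wk k) (jnt Fr (jnt (Aall k S) (RU S))) = 0;
  C6 : forall (k k' : 'I_K) (n : 'I_N) S, adm m S ->
         exists2 S', adm m S' &
           H (RU S') = H (RU S) /\
           same_dist P (jnt (Q n k S) (jnt (A n k S) (jnt W RS)))
                       (jnt (Q n k' S') (jnt (A n k' S') (jnt W RS)));
  C7 : forall (k : 'I_K) S, adm m S ->
         I (Wbar k) (jnt Fr (jnt (Aall k S) (RU S))) = 0;
  C8 : forall (k : 'I_K) S, adm m S ->
         I (RSmRU S) (jnt Fr (jnt (Aall k S) (jnt (Wk k) (RU S)))) = 0
}.

Definition answer_length_by_query (len : 'I_N -> TQ -> nat) (m : nat) : Prop :=
  forall n k S w, adm m S -> size (A n k S w) = len n (Q n k S w).

(* D bounds (hence, taking D minimal, equals) the maximal total number of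
   downloaded symbols over all k, admissible R_U and realizations *)
Definition download_at_most (D : nat) (m : nat) : Prop :=
  forall k S w, adm m S -> 0 < P w -> (\sum_(n < N) size (A n k S w) <= D)%N.

End SPIR.

(* Main.v *)
Require Import Defs.
From HB Require Import structures.
From mathcomp Require Import all_boot all_order all_algebra.
From mathcomp Require Import reals exp ring lra.
Import Order.TTheory GRing.Theory Num.Theory.
Local Open Scope ring_scope.

Section Ent.
Variables (R : realType) (Om : finType) (P : Om -> R).
Hypothesis hP : is_pmf P.

Lemma P_ge0 w : 0 <= P w. Proof. by case: hP. Qed.
Lemma P_sum : \sum_w P w = 1. Proof. by case: hP. Qed.

Lemma Pr_ge0 {T : eqType} (X : Om -> T) t : 0 <= Pr P X t.
Proof. by apply: sumr_ge0 => w _; exact: P_ge0. Qed.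

Lemma Pr_ge {T : eqType} (X : Om -> T) w : P w <= Pr P X (X w).
Proof.
rewrite /Pr (bigD1 w) //= lerDl; apply: sumr_ge0 => v _; exact: P_ge0.
Qed.

Lemma Pr_gt0 {T : eqType} (X : Om -> T) w : 0 < P w -> 0 < Pr P X (X w).
Proof. by move=> h; have := Pr_ge X w; apply: lt_le_trans. Qed.

Lemma Pr_le1 {T : eqType} (X : Om -> T) t : Pr P X t <= 1.
Proof.
rewrite -P_sum /Pr [X in _ <= X](bigID (fun w => X w == t)) /= lerDl.
by apply: sumr_ge0 => v _; exact: P_ge0.
Qed.

Definition SL {T : eqType} (X : Om -> T) := \sum_w P w * ln (Pr P X (X w)).

Lemma entE b {T : eqType} (X : Om -> T) : ent b P X = - SL X / ln b%:R.
Proof. by rewrite /ent /SL mulNr mulr_suml; congr (- _); apply: eq_bigr => w _; rewrite mulrA. Qed.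

Lemma Pr_ext {T U : eqType} (X : Om -> T) (Y : Om -> U) w :
  (forall v, (X v == X w) = (Y v == Y w)) -> Pr P X (X w) = Pr P Y (Y w).
Proof. by move=> h; apply: eq_bigl => v; rewrite h. Qed.

Lemma SL_ext {T U : eqType} (X : Om -> T) (Y : Om -> U) :
  (forall v w, (X v == X w) = (Y v == Y w)) -> SL X = SL Y.
Proof. by move=> h; apply: eq_bigr => w _; rewrite (Pr_ext _ _ _ (h^~ w)). Qed.

Lemma ent_ext b {T U : eqType} (X : Om -> T) (Y : Om -> U) :
  (forall v w, (X v == X w) = (Y v == Y w)) -> ent b P X = ent b P Y.
Proof. by move=> h; rewrite !entE (SL_ext _ _ h). Qed.

Lemma ln_le_sub1 (x : R) : 0 < x -> ln x <= x - 1.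
Proof.
move=> x0; have := @le_ln1Dx R (x - 1); rewrite addrCA subrr addr0; apply.
lra.
Qed.

Lemma gibbs {T : eqType} (U : Om -> T) (r : Om -> R) :
  (forall w, 0 < P w -> 0 < r w) ->
  \sum_w P w * (r w / Pr P U (U w)) <= 1 ->
  \sum_w P w * ln (r w / Pr P U (U w)) <= 0.
Proof.
move=> rpos hs.
apply: (@le_trans _ _ (\sum_w P w * (r w / Pr P U (U w) - 1))).
  apply: ler_sum => w _; have := P_ge0 w; rewrite le0r => /orP[/eqP->|pw].
    by rewrite !mul0r.
  rewrite ler_pM2l //; apply: ln_le_sub1; apply: divr_gt0; first exact: rpos.
  exact: Pr_gt0.
rewrite (eq_bigr (fun w => P w * (r w / Pr P U (U w)) - P w)); last first.
  by move=> w _; rewrite mulrBr mulr1.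
by rewrite sumrB P_sum subr_le0.
Qed.

Lemma class_sum {T : eqType} (U : Om -> T) t :
  \sum_(w | U w == t) P w / Pr P U (U w) <= 1.
Proof.
rewrite (eq_bigr (fun w => P w / Pr P U t)); last by move=> w /eqP->.
rewrite -mulr_suml -/(Pr P U t).
have := Pr_ge0 U t; rewrite le0r => /orP[/eqP->|h]; first by rewrite mul0r.
by rewrite mulfV ?gt_eqF.
Qed.

Lemma class_sum' {T : eqType} (U : Om -> T) t :
  \sum_w (U w == t)%:R * (P w / Pr P U (U w)) <= 1.
Proof.
apply: le_trans (class_sum U t); rewrite [X in _ <= X]big_mkcond /=.
by apply: ler_sum => w _; case: (U w == t); rewrite ?mul1r ?mul0r.
Qed.


Lemma PrE {T : eqType} (X : Om -> T) t : Pr P X t = \sum_v (X v == t)%:R * P v.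
Proof.
rewrite /Pr big_mkcond /=; apply: eq_bigr => v _.
by case: (X v == t); rewrite ?mul1r ?mul0r.
Qed.

Lemma SL_comb (T1 T2 T3 T4 : eqType) (A : Om -> T1) (B : Om -> T2)
   (C : Om -> T3) (D : Om -> T4) :
  SL A + SL B - SL C - SL D =
  \sum_w P w * ln ((Pr P A (A w) * Pr P B (B w) / Pr P D (D w)) / Pr P C (C w)).
Proof.
rewrite /SL -big_split -!sumrB /=; apply: eq_bigr => w _.
have := P_ge0 w; rewrite le0r => /orP[/eqP->|pw]; first by rewrite !mul0r !subr0 add0r.
have pA := Pr_gt0 A w pw; have pB := Pr_gt0 B w pw.
have pC := Pr_gt0 C w pw; have pD := Pr_gt0 D w pw.
rewrite ln_div ?posrE ?divr_gt0 ?mulr_gt0 // ln_div ?posrE ?mulr_gt0 //.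
rewrite lnM ?posrE //; ring.
Qed.

Lemma shannon {T1 T2 T3 : eqType} (X : Om -> T1) (Y : Om -> T2) (Z : Om -> T3) :
  SL (jnt X Z) + SL (jnt Y Z) <= SL (jnt X (jnt Y Z)) + SL Z.
Proof.
rewrite -subr_ge0 opprD addrA.
suff : SL (jnt X Z) + SL (jnt Y Z) - SL (jnt X (jnt Y Z)) - SL Z <= 0 by lra.
rewrite SL_comb.
set a := fun w => Pr P (jnt X (jnt Y Z)) (jnt X (jnt Y Z) w).
set d := fun w => Pr P Z (Z w).
apply: gibbs.
  move=> w pw; apply: divr_gt0; first apply: mulr_gt0; exact: Pr_gt0.
have E1 : forall w, P w * (Pr P (jnt X Z) (jnt X Z w) * Pr P (jnt Y Z) (jnt Y Z w) /
      Pr P Z (Z w) / Pr P (jnt X (jnt Y Z)) (jnt X (jnt Y Z) w)) =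
   \sum_v \sum_u ((jnt X Z v == jnt X Z w)%:R * P v) * ((jnt Y Z u == jnt Y Z w)%:R * P u)
      * (P w / (d w * a w)).
  move=> w; rewrite (PrE (jnt X Z)) (PrE (jnt Y Z)).
  transitivity ((\sum_v ((jnt X Z v == jnt X Z w)%:R * P v)) *
     (\sum_u ((jnt Y Z u == jnt Y Z w)%:R * P u)) * (P w / (d w * a w))).
    by rewrite /d /a invfM; ring.
  rewrite !mulr_suml; apply: eq_bigr => v _.
  by rewrite mulr_sumr mulr_suml; apply: eq_bigr => u _.
rewrite (eq_bigr _ (fun w _ => E1 w)) exchange_big /=.
apply: (@le_trans _ _ (\sum_v P v / d v * \sum_u (Z u == Z v)%:R * P u)).
  apply: ler_sum => v _; rewrite exchange_big mulr_sumr; apply: ler_sum => u _ /=.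
  have [zuv|zuv] := eqVneq (Z u) (Z v); last first.
    rewrite mul0r mulr0 le_eqVlt; apply/orP; left; apply/eqP.
    rewrite big1 // => w _.
    rewrite /jnt !xpair_eqE; case: (Z v =P Z w) => [e1|_]; case: (Z u =P Z w) => [e2|_];
      rewrite ?andbF ?mul0r ?mulr0 ?mul0r //.
    by move: zuv; rewrite e1 e2 eqxx.
  rewrite mul1r.
  apply: (@le_trans _ _ (P v / d v * P u * \sum_w (jnt X (jnt Y Z) w == (X v, (Y u, Z v)))%:R *
                 (P w / Pr P (jnt X (jnt Y Z)) (jnt X (jnt Y Z) w)))); last first.
    rewrite -[X in _ <= X]mulr1 ler_wpM2l ?class_sum' //.
    by rewrite mulr_ge0 ?divr_ge0 ?P_ge0 ?Pr_ge0.
  rewrite mulr_sumr; apply: ler_sum => w _; rewrite /jnt /= !xpair_eqE.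
  case: (boolP ((X v == X w) && (Z v == Z w) && ((Y u == Y w) && (Z u == Z w)))) =>
     [/andP[/andP[/eqP xw /eqP zw] /andP[/eqP yw _]] | hn].
    rewrite zuv xw yw zw !eqxx /= /d /a /jnt /= zw invfM.
    by rewrite le_eqVlt; apply/orP; left; apply/eqP; ring.
  have -> : ((X v == X w) && (Z v == Z w))%:R * P v * (((Y u == Y w) && (Z u == Z w))%:R * P u) = 0 :> R.
    move: hn; case: ((X v == X w) && (Z v == Z w)); case: ((Y u == Y w) && (Z u == Z w)) => //= _;
    by rewrite ?mul0r ?mulr0.
  rewrite mul0r; apply: mulr_ge0; first by rewrite mulr_ge0 ?divr_ge0 ?P_ge0 ?Pr_ge0.
  by apply: mulr_ge0; [case: (_ == _) | rewrite divr_ge0 ?P_ge0 ?Pr_ge0].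
under eq_bigr do rewrite -PrE.
apply: (@le_trans _ _ (\sum_v P v)); last by rewrite P_sum.
apply: ler_sum => v _; rewrite -mulrA; have := Pr_ge0 Z (Z v).
rewrite le0r => /orP[/eqP ->|h]; first by rewrite !mulr0 P_ge0.
by rewrite /d /= mulVf ?gt_eqF // mulr1.
Qed.


Lemma SL_le0 {T : eqType} (X : Om -> T) : SL X <= 0.
Proof.
apply: sumr_le0 => w _; have := P_ge0 w; rewrite le0r => /orP[/eqP->|pw].
  by rewrite mul0r.
by rewrite pmulr_rle0 // ln_le0 // Pr_le1.
Qed.

Lemma SL_mono {T U : eqType} (X : Om -> T) (Y : Om -> U) : SL (jnt X Y) <= SL Y.
Proof.
apply: ler_sum => w _; have := P_ge0 w; rewrite le0r => /orP[/eqP->|pw].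
  by rewrite !mul0r.
rewrite ler_pM2l // ler_ln ?posrE ?(Pr_gt0 _ _ pw) //.
rewrite !PrE; apply: ler_sum => v _; rewrite /jnt xpair_eqE.
by case: (X v == X w); case: (Y v == Y w); rewrite /= ?mul0r ?mul1r ?P_ge0.
Qed.


Lemma counting {T : eqType} (F : finType) (Y : Om -> T) (Zs : Om -> seq F) :
  (0 < #|F|)%N ->
  (forall v w, Y v = Y w -> size (Zs v) = size (Zs w)) ->
  SL Y - SL (jnt Zs Y) <= ln #|F|%:R * \sum_w P w * (size (Zs w))%:R.
Proof.
move=> F0 hs.
have q0 : 0 < (#|F|%:R : R) by rewrite ltr0n.
set s := fun w => size (Zs w).
rewrite mulr_sumr; rewrite -subr_le0 /SL -!sumrB.
rewrite (eq_bigr (fun w => P w * ln (Pr P Y (Y w) / #|F|%:R ^+ s w / Pr P (jnt Zs Y) (jnt Zs Y w)))); last first.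
  move=> w _; have := P_ge0 w; rewrite le0r => /orP[/eqP->|pw]; first by rewrite !mul0r mulr0 !subr0.
  have p1 := Pr_gt0 Y w pw; have p2 := Pr_gt0 (jnt Zs Y) w pw.
  rewrite ln_div ?posrE ?divr_gt0 ?exprn_gt0 // ln_div ?posrE ?exprn_gt0 // lnXn //.
  rewrite -mulr_natr /s; ring.
apply: gibbs.
  by move=> w pw; rewrite divr_gt0 ?exprn_gt0 ?Pr_gt0.
have E1 : forall w, P w * (Pr P Y (Y w) / #|F|%:R ^+ s w / Pr P (jnt Zs Y) (jnt Zs Y w)) =
   \sum_v P v * ((Y w == Y v)%:R * (P w / (#|F|%:R ^+ s v * Pr P (jnt Zs Y) (jnt Zs Y w)))).
  move=> w; rewrite PrE.
  transitivity ((\sum_v ((Y v == Y w)%:R * P v)) * (P w / (#|F|%:R ^+ s w * Pr P (jnt Zs Y) (jnt Zs Y w)))).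
    by rewrite invfM; ring.
  rewrite mulr_suml; apply: eq_bigr => v _.
  case: (Y v =P Y w) => [e|ne].
    rewrite e eqxx /s (hs _ _ e); ring.
  by rewrite eq_sym; case: eqP => // _; rewrite !mul0r mulr0.
rewrite (eq_bigr _ (fun w _ => E1 w)) exchange_big /=.
apply: (@le_trans _ _ (\sum_v P v)); last by rewrite P_sum.
apply: ler_sum => v _; rewrite -mulr_sumr -[X in _ <= X]mulr1 ler_wpM2l ?P_ge0 //.
set G := fun w => P w / Pr P (jnt Zs Y) (jnt Zs Y w).
have G0 : forall w, 0 <= G w by move=> w; rewrite divr_ge0 ?P_ge0 ?Pr_ge0.
rewrite (eq_bigr (fun w => (#|F|%:R ^+ s v)^-1 * ((Y w == Y v)%:R * G w))); last first.
  by move=> w _; rewrite /G invfM; ring.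
rewrite -mulr_sumr ler_pdivrMl ?exprn_gt0 // mulr1.
apply: (@le_trans _ _ (\sum_w \sum_(t : (s v).-tuple F) ((jnt Zs Y w == (val t, Y v))%:R * G w))).
  apply: ler_sum => w _; case: (Y w =P Y v) => [e|_]; last first.
    by rewrite mul0r; apply: sumr_ge0 => t _; rewrite mulr_ge0 ?G0.
  have hz : size (Zs w) == s v by rewrite /s (hs _ _ e).
  rewrite (bigD1 (Tuple hz)) //= /jnt e !eqxx mul1r lerDl.
  by apply: sumr_ge0 => t _; rewrite mulr_ge0 ?G0.
rewrite exchange_big /=.
apply: (@le_trans _ _ (\sum_(t : (s v).-tuple F) 1)).
  apply: ler_sum => t _; exact: class_sum'.
by rewrite sumr_const card_tuple natrX.
Qed.


Lemma sum_ind_uniq {T : eqType} (V : seq T) y : uniq V -> y \in V ->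
  \sum_(x <- V) ((y == x)%:R : R) = 1.
Proof.
move=> uV yV; rewrite (big_rem y) // eqxx big_seq big1; first by rewrite /= addr0.
move=> x.
rewrite (mem_rem_uniq _ uV) inE => /andP[xy _].
by rewrite eq_sym (negbTE xy).
Qed.

Lemma E_seq {T : eqType} (V : seq T) (K : Om -> T) (f : T -> R) :
  uniq V -> (forall w, K w \in V) ->
  \sum_w P w * f (K w) = \sum_(x <- V) f x * Pr P K x.
Proof.
move=> uV KV.
under eq_bigr => w _ do rewrite -[P w * _]mul1r -(sum_ind_uniq _ _ uV (KV w)) mulr_suml.
rewrite exchange_big /=; apply: eq_bigr => x _; rewrite PrE mulr_sumr.
apply: eq_bigr => w _; case: (K w =P x) => [->|] /=; first by ring.
by move=> _; rewrite !mul0r mulr0.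
Qed.

Lemma E_dist {T : eqType} (J J' : Om -> T) (f : T -> R) : same_dist P J J' ->
  \sum_w P w * f (J w) = \sum_w P w * f (J' w).
Proof.
move=> hd; set V := undup ([seq J w | w <- enum Om] ++ [seq J' w | w <- enum Om]).
have uV : uniq V by exact: undup_uniq.
have h1 : forall w, J w \in V.
  by move=> w; rewrite mem_undup mem_cat; apply/orP; left; apply: map_f; rewrite mem_enum.
have h2 : forall w, J' w \in V.
  by move=> w; rewrite mem_undup mem_cat; apply/orP; right; apply: map_f; rewrite mem_enum.
rewrite (E_seq V J f uV h1) (E_seq V J' f uV h2).
by apply: eq_bigr => x _; rewrite hd.
Qed.

Lemma SL_dist {T U : eqType} (J J' : Om -> T) (g : T -> U) : same_dist P J J' ->
  SL (fun w => g (J w)) = SL (fun w => g (J' w)).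
Proof.
move=> hd.
have hPr : forall t, Pr P (fun w => g (J w)) t = Pr P (fun w => g (J' w)) t.
  move=> t; rewrite !PrE.
  rewrite (eq_bigr (fun w => P w * (fun x => (g x == t)%:R) (J w))); last by move=> w _; rewrite mulrC.
  rewrite (E_dist J J' (fun x => (g x == t)%:R) hd); apply: eq_bigr => w _; by rewrite mulrC.
rewrite /SL (eq_bigr (fun w => P w * (fun x => ln (Pr P (fun w => g (J' w)) (g x))) (J w)));
  last by move=> w _; rewrite hPr.
exact: (E_dist J J' (fun x => ln (Pr P (fun w => g (J' w)) (g x))) hd).
Qed.


Lemma shan_g {T1 T2 T3 T4 T5 T6 : eqType} (X : Om -> T1) (Y : Om -> T2) (Z : Om -> T3)
  (XZ : Om -> T4) (YZ : Om -> T5) (XYZ : Om -> T6) :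
  (forall v w, (XZ v == XZ w) = (X v == X w) && (Z v == Z w)) ->
  (forall v w, (YZ v == YZ w) = (Y v == Y w) && (Z v == Z w)) ->
  (forall v w, (XYZ v == XYZ w) = [&& X v == X w, Y v == Y w & Z v == Z w]) ->
  SL XZ + SL YZ <= SL XYZ + SL Z.
Proof.
move=> h1 h2 h3.
rewrite (@SL_ext _ _ XZ (jnt X Z)); last by move=> v w; rewrite h1 /jnt xpair_eqE.
rewrite (@SL_ext _ _ YZ (jnt Y Z)); last by move=> v w; rewrite h2 /jnt xpair_eqE.
rewrite (@SL_ext _ _ XYZ (jnt X (jnt Y Z))); last by move=> v w; rewrite h3 /jnt !xpair_eqE.
exact: shannon.
Qed.

Lemma SL_cst : SL (fun _ : Om => tt) = 0.
Proof.
rewrite /SL big1 // => w _.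
have -> : Pr P (fun _ => tt) tt = 1 by rewrite /Pr -P_sum; apply: eq_bigl.
by rewrite ln1 mulr0.
Qed.

Lemma sub_g {T1 T2 T3 : eqType} (X : Om -> T1) (Y : Om -> T2) (XY : Om -> T3) :
  (forall v w, (XY v == XY w) = (X v == X w) && (Y v == Y w)) ->
  SL X + SL Y <= SL XY.
Proof.
move=> h; have := @shan_g _ _ _ _ _ _ X Y (fun _ => tt) X Y XY.
rewrite SL_cst addr0; apply.
- by move=> v w; rewrite andbT.
- by move=> v w; rewrite andbT.
- by move=> v w; rewrite h andbT.
Qed.

Lemma mono_g {T1 T2 : eqType} (X : Om -> T1) (Y : Om -> T2) :
  (forall v w, (X v == X w) ==> (Y v == Y w)) -> SL X <= SL Y.
Proof.
move=> h; apply: ler_sum => w _; have := P_ge0 w; rewrite le0r => /orP[/eqP->|pw].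
  by rewrite !mul0r.
rewrite ler_pM2l // ler_ln ?posrE ?(Pr_gt0 _ _ pw) //.
rewrite !PrE; apply: ler_sum => v _; have := h v w.
by case: (X v == X w); case: (Y v == Y w); rewrite /= ?mul0r ?mul1r ?P_ge0.
Qed.

Lemma det_ext {T1 T2 T3 : eqType} (X : Om -> T1) (Y : Om -> T2) (Z : Om -> T3) :
  SL (jnt X Y) = SL Y -> SL (jnt X (jnt Y Z)) = SL (jnt Y Z).
Proof.
move=> h; apply/eqP; rewrite eq_le; apply/andP; split.
  by apply: mono_g => v w; rewrite /jnt !xpair_eqE; do ! case: (_ == _).
have := @shan_g _ _ _ _ _ _ X Z Y (jnt X Y) (jnt Y Z) (jnt X (jnt Y Z)).
have e1 : forall v w, (jnt X Y v == jnt X Y w) = (X v == X w) && (Y v == Y w).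
  by move=> v w; rewrite /jnt xpair_eqE.
have e2 : forall v w, (jnt Y Z v == jnt Y Z w) = (Z v == Z w) && (Y v == Y w).
  by move=> v w; rewrite /jnt xpair_eqE andbC.
have e3 : forall v w, (jnt X (jnt Y Z) v == jnt X (jnt Y Z) w) =
   [&& X v == X w, Z v == Z w & Y v == Y w].
  by move=> v w; rewrite /jnt !xpair_eqE; do ! case: (_ == _).
move=> /(_ e1 e2 e3); rewrite h; lra.
Qed.

Lemma SL_minf0 b {T U : eqType} (X : Om -> T) (Y : Om -> U) : (1 < b)%N ->
  minf b P X Y = 0 -> SL X + SL Y = SL (jnt X Y).
Proof.
move=> b1; rewrite /minf !entE -!mulrDl -mulrBl => /eqP; rewrite mulf_eq0 invr_eq0.
have : ln (b%:R : R) != 0 by rewrite gt_eqF // ln_gt0 // ltr1n.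
move=> /negbTE -> /orP[/eqP h|//]; lra.
Qed.

Lemma SL_cent0 b {T U : eqType} (X : Om -> T) (Y : Om -> U) : (1 < b)%N ->
  cent b P X Y = 0 -> SL (jnt X Y) = SL Y.
Proof.
move=> b1; rewrite /cent !entE -mulrBl => /eqP; rewrite mulf_eq0 invr_eq0.
have : ln (b%:R : R) != 0 by rewrite gt_eqF // ln_gt0 // ltr1n.
move=> /negbTE -> /orP[/eqP h|//]; lra.
Qed.

End Ent.

Arguments SL {R Om} P {T} X.


Lemma count_fix (F : finFieldType) (K L : nat) (k : 'I_K) (x : {ffun 'I_L -> F}) :
  #|[pred y : {ffun 'I_K -> {ffun 'I_L -> F}} | y k == x]| = (#|F| ^ (L * K) %/ #|F| ^ L)%N.
Proof.
set c := fun x : {ffun 'I_L -> F} => #|[pred y : {ffun 'I_K -> {ffun 'I_L -> F}} | y k == x]|.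
have cx : forall x, c x = c 0.
  move=> x0; rewrite /c -!sum1_card.
  pose h := fun y : {ffun 'I_K -> {ffun 'I_L -> F}} =>
    ([ffun j => (if j == k then y j + x0 else y j) : {ffun 'I_L -> F}] : {ffun 'I_K -> {ffun 'I_L -> F}}).
  have hinj : injective h.
    move=> y1 y2 e; apply/ffunP => j; move/ffunP: e => /(_ j); rewrite /h !ffunE.
    by case: (j == k) => // /addIr.
  rewrite (reindex_inj hinj) /=; apply: eq_bigl => y; rewrite /h !inE ffunE eqxx.
  by rewrite -{2}[x0]add0r (can_eq (addrK x0)).
have cE : forall x, c x = (\sum_(y : {ffun 'I_K -> {ffun 'I_L -> F}}) (y k == x : nat))%N.
  move=> x0; rewrite /c -sum1_card big_mkcond /=; apply: eq_bigr => y _.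
  by rewrite inE; case: (_ == _).
have tot : (\sum_(x : {ffun 'I_L -> F}) c x = #|F| ^ (L * K))%N.
  under eq_bigr do rewrite cE.
  rewrite exchange_big /=.
  rewrite (eq_bigr (fun _ => 1%N)); last first.
    move=> y _; rewrite (bigD1 (y k)) //= eqxx big1 // => x0 /negbTE.
    by rewrite eq_sym => ->.
  by rewrite sum1_card card_ffun card_ffun !card_ord -expnM mulnC.
have : (#|F| ^ L * c 0%R = #|F| ^ (L * K))%N.
  by rewrite -tot (eq_bigr (fun _ => c 0%R)) ?sum_nat_const ?card_ffun ?card_ord // => y _; rewrite cx.
move=> h; rewrite -/(c x) cx -h mulKn // expn_gt0; apply/orP; left; apply/card_gt0P; by exists 0%R.
Qed.

Section Main.
Variables (R : realType) (Om : finType) (P : Om -> R) (F : finFieldType)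
    (N K L M m : nat) (C TF TQ : eqType)
    (W : Om -> {ffun 'I_K -> {ffun 'I_L -> F}})
    (RS : Om -> {ffun 'I_M -> C})
    (Fr : Om -> TF)
    (Q : 'I_N -> 'I_K -> {set 'I_M} -> Om -> TQ)
    (A : 'I_N -> 'I_K -> {set 'I_M} -> Om -> seq F)
    (len : 'I_N -> TQ -> nat) (D : nat).
Hypotheses (hP : is_pmf P) (hW : messages_uniform P W) (hV : valid_scheme P W RS Fr Q A m)
  (hlen : answer_length_by_query Q A len m) (hD : download_at_most P A D m).

Lemma q1 : (1 < #|F|)%N.
Proof. by rewrite (cardD1 0) (cardD1 1) !inE oner_neq0. Qed.

Lemma eqRS S v w : (RS v == RS w) = (RU RS S v == RU RS S w) && (RSmRU RS S v == RSmRU RS S w).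
Proof.
apply/eqP/andP => [e|[/eqP h1 /eqP h2]]; first by rewrite /RSmRU /RU e.
apply/ffunP => i.
move/ffunP/(_ i): h1; move/ffunP/(_ i): h2; rewrite /RSmRU /RU !ffunE inE.
by case: (i \in S) => /= [_ []|[]].
Qed.

Lemma dWk k v w : (W v == W w) ==> (Wk W k v == Wk W k w).
Proof. by apply/implyP => /eqP; rewrite /Wk => ->. Qed.

Lemma dWb k k' v w : k != k' -> (Wbar W k' v == Wbar W k' w) ==> (Wk W k v == Wk W k w).
Proof.
move=> kk; apply/implyP => /eqP/ffunP/(_ k); rewrite /Wbar /Wk !ffunE (negbTE kk).
by case=> ->.
Qed.

Lemma dQ n k S v w : (Qall Q k S v == Qall Q k S w) ==> (Q n k S v == Q n k S w).
Proof. by apply/implyP => /eqP/ffunP/(_ n); rewrite /Qall !ffunE => ->. Qed.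

Lemma dA n k S v w : (Aall A k S v == Aall A k S w) ==> (A n k S v == A n k S w).
Proof. by apply/implyP => /eqP/ffunP/(_ n); rewrite /Aall !ffunE => ->. Qed.

Local Notation shan := (@shan_g _ _ P hP).
Local Notation sub := (@sub_g _ _ P hP).
Local Notation mono := (@mono_g _ _ P hP).
Local Notation SLx := (@SL_ext _ _ P).

Lemma qq : (1 < #|F|)%N. Proof. exact: q1. Qed.

Lemma detQn k S n {T : eqType} (Z : Om -> T) : adm m S ->
  SL P (jnt (Q n k S) (jnt Fr Z)) = SL P (jnt Fr Z).
Proof.
move=> hS; have c3 := @SL_cent0 _ _ P _ _ _ _ _ qq (C3 hV k hS).
have d := @det_ext _ _ P hP _ _ _ _ _ Z c3.
apply/eqP; rewrite eq_le; apply/andP; split.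
  by apply: mono => v w; rewrite /jnt !xpair_eqE; do ! case: (_ == _).
rewrite -d (@SL_ext _ _ P _ _ _ (jnt (Qall Q k S) (jnt (Q n k S) (jnt Fr Z)))).
  exact: SL_mono.
move=> v w; move: (dQ n k S v w); rewrite /jnt !xpair_eqE; do ! case: (_ == _) => //.
Qed.

Lemma priv (k k' : 'I_K) S n : k != k' -> adm m S ->
  SL P (jnt (Wk W k) (jnt (Q n k S) (A n k S))) <= SL P (Wk W k) + SL P (jnt (Q n k S) (A n k S)).
Proof.
move=> kk hS; have [S' hS' [_ hd]] := C6 hV k k' n hS.
have e1 := @SL_dist _ _ P _ _ _ _ (fun j : TQ * (seq F * ({ffun 'I_K -> {ffun 'I_L -> F}} * {ffun 'I_M -> C})) => (j.1, j.2.1)) hd.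
have e2 := @SL_dist _ _ P _ _ _ _ (fun j : TQ * (seq F * ({ffun 'I_K -> {ffun 'I_L -> F}} * {ffun 'I_M -> C})) => (j.2.2.1 k, (j.1, j.2.1))) hd.
rewrite [X in X <= _](_ : _ = SL P (jnt (Wk W k) (jnt (Q n k' S') (A n k' S')))); last exact: e2.
rewrite [X in _ <= _ + X](_ : _ = SL P (jnt (Q n k' S') (A n k' S'))); last exact: e1.
set Wb := Wbar W k'; set Wkk := Wk W k; set T' := jnt (Q n k' S') (A n k' S').
set G := jnt Fr (jnt (Aall A k' S') (RU RS S')).
have c7 := @SL_minf0 _ _ P _ _ _ _ _ qq (C7 hV k' hS').
have g1 : SL P (jnt T' G) = SL P G.
  apply/eqP; rewrite eq_le; apply/andP; split.
    by apply: mono => v w; rewrite /jnt !xpair_eqE; do ! case: (_ == _).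
  rewrite -(detQn k' S' n (jnt (Aall A k' S') (RU RS S')) hS') /G.
  apply: mono => v w; move: (dA n k' S' v w); rewrite /T' /jnt !xpair_eqE; do ! case: (_ == _) => //.
have g2 : SL P (jnt Wb (jnt T' G)) = SL P (jnt Wb G).
  apply/eqP; rewrite eq_le; apply/andP; split.
    by apply: mono => v w; rewrite /jnt !xpair_eqE; do ! case: (_ == _).
  have := detQn k' S' n (jnt Wb (jnt (Aall A k' S') (RU RS S'))) hS'.
  rewrite (@SL_ext _ _ P _ _ (jnt Fr (jnt Wb (jnt (Aall A k' S') (RU RS S')))) (jnt Wb G)); last first.
    by move=> v w; rewrite /G /jnt !xpair_eqE; do ! case: (_ == _).
  move=> <-; apply: mono => v w; move: (dA n k' S' v w); rewrite /G /T' /jnt !xpair_eqE.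
  by do ! case: (_ == _).
have p1 := @shan _ _ _ _ _ _ Wb T' Wkk Wb (jnt Wkk T') (jnt Wb T').
have p2 := @shan _ _ _ _ _ _ Wb G T' (jnt Wb T') (jnt T' G) (jnt Wb (jnt T' G)).
have h1 : forall v w, (Wb v == Wb w) = (Wb v == Wb w) && (Wkk v == Wkk w).
  by move=> v w; move: (dWb k k' v w kk); rewrite -/Wb -/Wkk; do ! case: (_ == _).
have h2 : forall v w, (jnt Wkk T' v == jnt Wkk T' w) = (T' v == T' w) && (Wkk v == Wkk w).
  by move=> v w; rewrite /jnt !xpair_eqE; do ! case: (_ == _).
have h3 : forall v w, (jnt Wb T' v == jnt Wb T' w) = [&& Wb v == Wb w, T' v == T' w & Wkk v == Wkk w].
  by move=> v w; move: (dWb k k' v w kk); rewrite -/Wb -/Wkk /jnt !xpair_eqE; do ! case: (_ == _).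
have h4 : forall v w, (jnt Wb T' v == jnt Wb T' w) = (Wb v == Wb w) && (T' v == T' w).
  by move=> v w; rewrite /jnt !xpair_eqE.
have h5 : forall v w, (jnt T' G v == jnt T' G w) = (G v == G w) && (T' v == T' w).
  by move=> v w; rewrite /jnt !xpair_eqE andbC.
have h6 : forall v w, (jnt Wb (jnt T' G) v == jnt Wb (jnt T' G) w) = [&& Wb v == Wb w, G v == G w & T' v == T' w].
  by move=> v w; rewrite /jnt !xpair_eqE; do ! case: (_ == _).
move: (p1 h1 h2 h3) (p2 h4 h5 h6); rewrite g1 g2 -c7; lra.
Qed.


Lemma SL_Wk k : (0 < K)%N -> SL P (Wk W k) = - (L%:R * ln (#|F|%:R : R)).
Proof.
move=> K0.
have q0 : 0 < (#|F|%:R : R) by rewrite ltr0n; apply: ltnW; exact: qq.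
have hPr : forall x, Pr P (Wk W k) x = (#|F|%:R ^+ L)^-1.
  move=> x; rewrite /Pr /Wk (partition_big (fun w => W w) [pred y : {ffun 'I_K -> {ffun 'I_L -> F}} | y k == x]) //=.
  rewrite (eq_bigr (fun _ => 1 / (#|F|%:R ^+ (K * L)))); last first.
    move=> y yx; rewrite -(hW y) /Pr; apply: eq_bigl => w.
    by case: (W w =P y) => [->|]; rewrite ?andbT ?andbF ?yx.
  rewrite sumr_const.
  have -> : #|[pred y : {ffun 'I_K -> {ffun 'I_L -> F}} | y k == x]| = (#|F| ^ (L * K) %/ #|F| ^ L)%N.
    exact: count_fix.
  have hd : (#|F| ^ (L * K) %/ #|F| ^ L * #|F| ^ L = #|F| ^ (L * K))%N.
    by apply: divnK; apply: dvdn_exp2l; rewrite leq_pmulr.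
  set c := (#|F| ^ (L * K) %/ #|F| ^ L)%N in hd *.
  have hq : (#|F|%:R : R) ^+ (K * L) = c%:R * #|F|%:R ^+ L.
    by rewrite mulnC -natrX -hd natrM natrX.
  rewrite hq mul1r invfM -[LHS]mulr_natl mulrA mulfV ?mul1r // pnatr_eq0.
  by apply/eqP => c0; move: hd; rewrite c0 mul0n => /esym/eqP; rewrite expn_eq0 -leqn0 leqNgt (ltnW qq).
rewrite /SL (eq_bigr (fun w => P w * ln ((#|F|%:R ^+ L)^-1))); last by move=> w _; rewrite hPr.
by rewrite -mulr_suml P_sum // mul1r lnV ?posrE ?exprn_gt0 // lnXn // mulr_natl.
Qed.

Section Star.
Variables (k k' : 'I_K) (S : {set 'I_M}) (n : 'I_N).
Hypotheses (kk : k != k') (hS : adm m S) (K0 : (0 < K)%N).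

Local Notation Wkk := (Wk W k).
Local Notation U := (RU RS S).
Local Notation V := (RSmRU RS S).
Local Notation Qa := (Qall Q k S).
Local Notation Aa := (Aall A k S).
Local Notation Qn := (Q n k S).
Local Notation An := (A n k S).
Local Notation T := (jnt Qn An).
Local Notation G8 := (jnt Fr (jnt Aa (jnt Wkk U))).

Ltac cv := let v := fresh "v" in let w := fresh "w" in
  move=> v w; rewrite /jnt ?xpair_eqE; do ! case: (_ == _) => //.

Lemma star : L%:R * ln (#|F|%:R : R) <= - SL P U + SL P (jnt An Qa) - SL P (jnt Aa (jnt An Qa)).
Proof.
have c1 : SL P W + SL P (jnt Fr (jnt U V)) = SL P (jnt W (jnt Fr (jnt U V))).
  have := @SL_minf0 _ _ P _ _ _ _ _ qq (C1 hV k hS).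
  rewrite (@SL_ext _ _ P _ _ (jnt (cst k) (jnt Fr (jnt RS U))) (jnt Fr (jnt U V))); last first.
    by move=> v w; rewrite /jnt /cst !xpair_eqE (eqRS S) eqxx; do ! case: (_ == _).
  rewrite (@SL_ext _ _ P _ _ (jnt W (jnt (cst k) (jnt Fr (jnt RS U)))) (jnt W (jnt Fr (jnt U V)))) //.
  by move=> v w; rewrite /jnt /cst !xpair_eqE (eqRS S) eqxx; do ! case: (_ == _).
have c8 : SL P V + SL P G8 = SL P (jnt V G8) := @SL_minf0 _ _ P _ _ _ _ _ qq (C8 hV k hS).
have c5 : SL P (jnt Wkk (jnt Fr (jnt Aa U))) = SL P (jnt Fr (jnt Aa U)) :=
  @SL_cent0 _ _ P _ _ _ _ _ qq (C5 hV k hS).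
have c4 : SL P (jnt An (jnt Qn (jnt W RS))) = SL P (jnt Qn (jnt W RS)) :=
  @SL_cent0 _ _ P _ _ _ _ _ qq (C4 hV n k hS).
have c3 : SL P (jnt Qa Fr) = SL P Fr := @SL_cent0 _ _ P _ _ _ _ _ qq (C3 hV k hS).
have fa1 : SL P W + SL P (jnt U V) <= SL P (jnt W (jnt U V)) by apply: sub; cv.
have fa2 : SL P V + SL P U <= SL P (jnt U V) by apply: sub; cv.
have fa3 : SL P (jnt Fr (jnt U V)) + SL P G8 <= SL P (jnt V G8) + SL P (jnt Fr U).
  by apply: (@shan _ _ _ _ _ _ V (jnt Aa Wkk) (jnt Fr U)); cv.
have fb : SL P (jnt W (jnt U V)) + SL P (jnt U Qn) <= SL P (jnt W (jnt U (jnt V Qn))) + SL P U.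
  by apply: (@shan _ _ _ _ _ _ (jnt W (jnt U V)) Qn U); cv.
have d1 : SL P (jnt W (jnt Fr (jnt U (jnt V Qn)))) = SL P (jnt W (jnt Fr (jnt U V))).
  have := detQn k S n (jnt W (jnt U V)) hS.
  rewrite (@SL_ext _ _ P _ _ (jnt Qn (jnt Fr (jnt W (jnt U V)))) (jnt W (jnt Fr (jnt U (jnt V Qn))))); last by cv.
  by rewrite (@SL_ext _ _ P _ _ (jnt Fr (jnt W (jnt U V))) (jnt W (jnt Fr (jnt U V)))); last by cv.
have d2 : SL P (jnt Fr (jnt U Qn)) = SL P (jnt Fr U).
  have := detQn k S n U hS.
  by rewrite (@SL_ext _ _ P _ _ (jnt Qn (jnt Fr U)) (jnt Fr (jnt U Qn))); last by cv.
have e0 : SL P (jnt W (jnt U (jnt V T))) = SL P (jnt W (jnt U (jnt V Qn))).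
  move: c4; rewrite (@SL_ext _ _ P _ _ (jnt An (jnt Qn (jnt W RS))) (jnt W (jnt U (jnt V T)))); last first.
    by move=> v w; rewrite /jnt !xpair_eqE (eqRS S); do ! case: (_ == _).
  rewrite (@SL_ext _ _ P _ _ (jnt Qn (jnt W RS)) (jnt W (jnt U (jnt V Qn)))) //.
  by move=> v w; rewrite /jnt !xpair_eqE (eqRS S); do ! case: (_ == _).
have e1 : SL P (jnt W (jnt Fr (jnt U (jnt V T)))) = SL P (jnt W (jnt Fr (jnt U (jnt V Qn)))).
  have := @det_ext _ _ P hP _ _ _ _ _ Fr c4.
  rewrite (@SL_ext _ _ P _ _ (jnt An (jnt (jnt Qn (jnt W RS)) Fr)) (jnt W (jnt Fr (jnt U (jnt V T))))); last first.
    by move=> v w; rewrite /jnt !xpair_eqE (eqRS S); do ! case: (_ == _).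
  rewrite (@SL_ext _ _ P _ _ (jnt (jnt Qn (jnt W RS)) Fr) (jnt W (jnt Fr (jnt U (jnt V Qn))))) //.
  by move=> v w; rewrite /jnt !xpair_eqE (eqRS S); do ! case: (_ == _).
have fc : SL P (jnt U T) + SL P (jnt Fr (jnt U Qn)) <= SL P (jnt Fr (jnt U T)) + SL P (jnt U Qn).
  by apply: (@shan _ _ _ _ _ _ An Fr (jnt U Qn)); cv.
have fd : SL P (jnt W (jnt U (jnt V T))) + SL P (jnt Wkk (jnt Fr (jnt U T))) <=
          SL P (jnt W (jnt Fr (jnt U (jnt V T)))) + SL P (jnt Wkk (jnt U T)).
  apply: (@shan _ _ _ _ _ _ (jnt W (jnt U V)) Fr (jnt Wkk (jnt U T))).
  - by move=> v w; move: (dWk k v w); rewrite /jnt !xpair_eqE; do ! case: (_ == _).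
  - by cv.
  - by move=> v w; move: (dWk k v w); rewrite /jnt !xpair_eqE; do ! case: (_ == _).
have f3 : SL P (jnt Wkk (jnt U T)) <= SL P (jnt Wkk T) by apply: mono; cv.
have f4 : SL P T + SL P U <= SL P (jnt U T) by apply: sub; cv.
have f6a : SL P (jnt Wkk (jnt Aa (jnt Fr (jnt U T)))) <= SL P (jnt Wkk (jnt Fr (jnt U T))).
  by apply: mono; cv.
have f6b : SL P (jnt Wkk (jnt Fr (jnt Aa U))) + SL P (jnt Aa (jnt Fr (jnt U T))) <=
           SL P (jnt Wkk (jnt Aa (jnt Fr (jnt U T)))) + SL P (jnt Fr (jnt Aa U)).
  by apply: (@shan _ _ _ _ _ _ Wkk T (jnt Fr (jnt Aa U))); cv.
have dQa : forall (TT : eqType) (Z : Om -> TT), SL P (jnt Qa (jnt Fr Z)) = SL P (jnt Fr Z).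
  by move=> TT Z; exact: (@det_ext _ _ P hP _ _ _ _ _ Z c3).
have d3 : SL P (jnt Qa (jnt Aa (jnt Fr (jnt U T)))) = SL P (jnt Aa (jnt Fr (jnt U T))).
  have := dQa _ (jnt Aa (jnt U T)).
  rewrite (@SL_ext _ _ P _ _ (jnt Qa (jnt Fr (jnt Aa (jnt U T)))) (jnt Qa (jnt Aa (jnt Fr (jnt U T))))); last by cv.
  by rewrite (@SL_ext _ _ P _ _ (jnt Fr (jnt Aa (jnt U T))) (jnt Aa (jnt Fr (jnt U T)))); last by cv.
have d4 : SL P (jnt Qa (jnt Fr (jnt U T))) = SL P (jnt Fr (jnt U T)) := dQa _ (jnt U T).
have f7 : SL P (jnt Aa (jnt An Qa)) + SL P (jnt Qa (jnt Fr (jnt U T))) <=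
          SL P (jnt Qa (jnt Aa (jnt Fr (jnt U T)))) + SL P (jnt An Qa).
  by apply: (@shan _ _ _ _ _ _ Aa (jnt Fr (jnt U Qn)) (jnt An Qa)); cv.
have pv := priv k k' S n kk hS.
have wk := SL_Wk k K0.
lra.
Qed.


Definition Zn w := flatten [seq A j k S w | j <- index_enum 'I_N & j != n].

Lemma size_Zn w : size (Zn w) = (\sum_(j | j != n) size (A j k S w))%N.
Proof.
rewrite /Zn size_flatten /shape -map_comp sumnE big_map big_filter //.
Qed.

Lemma star2 : L%:R * ln (#|F|%:R : R) <=
  - SL P U + ln (#|F|%:R : R) * \sum_w P w * (\sum_(j | j != n) size (A j k S w))%:R.
Proof.
have hc := @counting _ _ P hP _ F (jnt An Qa) Zn (ltnW qq).
have e : SL P (jnt Aa (jnt An Qa)) = SL P (jnt Zn (jnt An Qa)).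
  apply: SL_ext => v w; rewrite /jnt !xpair_eqE.
  case: (An v =P An w) => [ea|]; last by rewrite !andbF.
  case: (Qa v =P Qa w) => [eq|]; last by rewrite !andbF.
  rewrite !andbT; apply/eqP/eqP => [ev|ez].
    by rewrite /Zn; congr flatten; apply: eq_map => j; rewrite -!(ffunE (fun j => A j k S _)) -/(Aall A k S v) ev.
  apply/ffunP => j; rewrite !ffunE; case: (eqVneq j n) => [->//|jn].
  have sh : shape [seq A j k S v | j <- index_enum 'I_N & j != n] =
            shape [seq A j k S w | j <- index_enum 'I_N & j != n].
    rewrite /shape -!map_comp; apply: eq_map => i /=.
    rewrite !hlen //; congr (len i _); move/ffunP/(_ i): eq; by rewrite !ffunE.
  have := flattenK [seq A j k S v | j <- index_enum 'I_N & j != n].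
  rewrite sh -/(Zn v) ez /Zn flattenK => /esym /eq_in_map /(_ j); apply.
  by rewrite mem_filter jn mem_index_enum.
have hs : forall v w, jnt An Qa v = jnt An Qa w -> size (Zn v) = size (Zn w).
  move=> v w [_ eq]; rewrite !size_Zn; apply: eq_bigr => j _.
  rewrite !hlen //; congr (len j _); move/ffunP/(_ j): eq; by rewrite !ffunE.
have := hc hs; rewrite -e.
under eq_bigr do rewrite size_Zn.
have := star; lra.
Qed.

End Star.

End Main.

Theorem lemma9 (R : realType) (Om : finType) (P : Om -> R) (F : finFieldType)
    (N K L M m : nat) (C TF TQ : eqType)
    (W : Om -> {ffun 'I_K -> {ffun 'I_L -> F}})
    (RS : Om -> {ffun 'I_M -> C})
    (Fr : Om -> TF)
    (Q : 'I_N -> 'I_K -> {set 'I_M} -> Om -> TQ)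
    (A : 'I_N -> 'I_K -> {set 'I_M} -> Om -> seq F)
    (len : 'I_N -> TQ -> nat) (D : nat) :
  is_pmf P ->
  (1 <= N)%N -> (2 <= K)%N ->
  messages_uniform P W ->
  valid_scheme P W RS Fr Q A m ->
  answer_length_by_query Q A len m ->
  download_at_most P A D m ->
  forall S : {set 'I_M}, adm m S ->
    N%:R * L%:R <= (N%:R - 1) * D%:R + N%:R * ent #|F| P (RU RS S).
Proof.
move=> hP N1 K2 hW hV hlen hD S hS.
have K0 : (0 < K)%N by apply: leq_trans K2.
pose k := Ordinal K0; pose k' := Ordinal K2.
have kk : k != k' by [].
set lq := ln (#|F|%:R : R).
have lq0 : 0 < lq by rewrite ln_gt0 // ltr1n; exact: q1.
set tot := fun w => (\sum_(j < N) size (A j k S w))%N.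
have hn : forall n : 'I_N, L%:R * lq <= - SL P (RU RS S) +
    lq * \sum_w P w * (\sum_(j | j != n) size (A j k S w))%:R.
  move=> n; exact: (@star2 _ _ _ _ _ _ _ _ _ _ _ _ _ _ _ _ _ len hP hW hV hlen k k' S n kk hS K0).
have hsum : \sum_(n < N) \sum_w P w * (\sum_(j | j != n) size (A j k S w))%:R
           = (N%:R - 1) * \sum_w P w * (tot w)%:R.
  rewrite exchange_big mulr_sumr; apply: eq_bigr => w _.
  rewrite -mulr_sumr mulrCA; congr (P w * _).
  have ex : forall n : 'I_N, ((\sum_(j | j != n) size (A j k S w))%:R : R) =
      (tot w)%:R - (size (A n k S w))%:R.
    move=> n; rewrite /tot !natr_sum [X in _ = X - _](bigD1 n) //=; lra.
  under eq_bigr do rewrite ex.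
  rewrite sumrB sumr_const card_ord /tot natr_sum; lra.
have hE : \sum_w P w * ((tot w)%:R : R) <= D%:R.
  apply: (@le_trans _ _ (\sum_w P w * D%:R)); last by rewrite -mulr_suml P_sum // mul1r.
  apply: ler_sum => w _; have := @P_ge0 _ _ P hP w; rewrite le0r => /orP[/eqP->|pw].
    by rewrite !mul0r.
  by rewrite ler_pM2l // ler_nat; exact: (hD k S w hS pw).
have hN : 0 <= (N%:R : R) - 1 by rewrite subr_ge0 ler1n.
have sumn : \sum_(n < N) (L%:R * lq) <= \sum_(n < N) (- SL P (RU RS S) +
    lq * \sum_w P w * (\sum_(j | j != n) size (A j k S w))%:R).
  by apply: ler_sum => n _; exact: hn n.
rewrite big_split /= in sumn.
have e1 : \sum_(n < N) (L%:R * lq) = N%:R * (L%:R * lq) by rewrite sumr_const cardT size_enum_ord (mulr_natl _ N).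


have e2 : \sum_(n < N) (- SL P (RU RS S)) = N%:R * (- SL P (RU RS S)).
  by rewrite sumr_const cardT size_enum_ord (mulr_natl _ N).
have e3 : \sum_(n < N) lq * \sum_w P w * ((\sum_(j | j != n) size (A j k S w))%:R : R) =
  lq * ((N%:R - 1) * \sum_w P w * ((tot w)%:R : R)) by rewrite -mulr_sumr hsum.
rewrite e1 e2 e3 in sumn.
rewrite entE.
move: sumn hE; move: (SL P (RU RS S)) (\sum_w P w * ((tot w)%:R : R)) => x E sumn hE.
rewrite -/lq.
have h3 : lq * ((N%:R - 1) * E) <= lq * ((N%:R - 1) * D%:R).
  apply: ler_wpM2l; first exact: ltW lq0.
  by apply: ler_wpM2l.
rewrite -(ler_pM2r lq0).
have -> : ((N%:R - 1) * D%:R + N%:R * (- x / lq)) * lq = lq * ((N%:R - 1) * D%:R) - N%:R * x.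
  by field; rewrite gt_eqF.
clear -sumn h3.
lra.
Qed.
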